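(* Online gradient descent with a fixed restart schedule (as defined in the context) is a linear forecaster. Consequently, for fixed constants $C>0$, $U>0$, $\sigma>0$, its worst-case expected cumulative squared error $\sup_{\theta_{1:n}}\mathbb{E}\big[\sum_{t=1}^n(x_t-\theta_t)^2\big]$, the supremum being over $\theta_{1:n}\in\mathrm{TV}(C)$ with $|\theta_1|\le U$, is at least $\tilde\Omega(\sqrt n)$ as $n\to\infty$, whatever the restart schedule and step sizes.
   Context: Setting: $y_t=\theta_t+Z_t$ with $Z_1,\dots,Z_n$ independent zero-mean $\sigma$-subgaussian noise; the forecaster outputs $x_t$ based on $y_1,\dots,y_{t-1}$ only. $\mathrm{TV}(C)=\{\theta_{1:n}:\sum_{i=2}^n|\theta_i-\theta_{i-1}|\le C\}$. A linear forecaster is one whose predictions satisfy $x_t=\sum_{s<t}a_{t,s}y_s$ for a fixed, data-independent array of coefficients $a_{t,s}$. Online gradient descent (OGD) with a fixed restart schedule: the time axis $1,\dots,n$ is partitioned into consecutive blocks by a schedule fixed in advance; at the start of each block the iterate is reset to a fixed linear combination of past observations (e.g. $0$ or the previous observation), and within a block it is updated by $x_{t+1}=x_t-\eta_t\cdot 2(x_t-y_t)$ (the stochastic gradient of the loss $(x-\theta_t)^2$) with fixed, data-independent step sizes $\eta_t$. $\tilde\Omega$ hides logarithmic factors in $n$. *)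

(* Defs.v *)
From mathcomp Require Import all_boot all_order all_algebra.
From mathcomp Require Import all_classical all_reals all_analysis.
Set Implicit Arguments. Unset Strict Implicit. Unset Printing Implicit Defensive.
Import Order.TTheory GRing.Theory Num.Theory.
Local Open Scope classical_set_scope.
Local Open Scope ring_scope.
Local Open Scope ereal_scope.
Local Open Scope ring_scope.

(* Time is indexed 0,1,...,n-1 (paper: 1,...,n).  Observations y : nat -> R. *)

Definition is_linear_forecaster (R : realType)
    (F : (nat -> R) -> nat -> R) : Prop :=
  exists a : nat -> nat -> R, forall (y : nat -> R) (t : nat),
    F y t = \sum_(s < t) a t s * y s.

(* Online gradient descent with a fixed restart schedule.
   - [restart t] : a new block starts at time t (time 0 always starts a block);
   - [r t s]     : at a block start t, the iterate is reset to the fixed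
                   linear combination sum_{s<t} r t s * y_s (at t = 0 this is 0);
   - [eta t]     : fixed step sizes; within a block
                   x_{t+1} = x_t - eta_t * 2 (x_t - y_t). *)
Fixpoint ogd (R : realType) (restart : nat -> bool) (r : nat -> nat -> R)
    (eta : nat -> R) (y : nat -> R) (t : nat) : R :=
  match t with
  | 0 => 0
  | t'.+1 =>
      if restart t'.+1 then \sum_(s < t'.+1) r t'.+1 s * y s
      else ogd restart r eta y t' - eta t' * (2 * (ogd restart r eta y t' - y t'))
  end.

Definition TVball (R : realType) (n : nat) (C U : R) : set (nat -> R) :=
  [set theta | \sum_(1 <= i < n) `|theta i - theta i.-1| <= C /\ `|theta 0%N| <= U].

(* Mutual independence of Z_0, ..., Z_{n-1} (product rule for all measurable
   B_0,...,B_{n-1}; taking B_t = setT recovers every finite subfamily). *)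
Definition mutually_independent (d : measure_display) (T : measurableType d)
    (R : realType) (P : probability T R) (n : nat) (Z : nat -> T -> R) : Prop :=
  forall B : nat -> set R, (forall t, measurable (B t)) ->
    P (\bigcap_(t in [set t | (t < n)%N]) (Z t @^-1` B t)) =
    (\prod_(t < n) P (Z t @^-1` B t))%E.

Definition subgaussian (d : measure_display) (T : measurableType d)
    (R : realType) (P : probability T R) (sigma : R) (X : T -> R) : Prop :=
  forall l : R, ('E_P[fun w => expR (l * X w)] <= (expR (l ^+ 2 * sigma ^+ 2 / 2))%:E)%E.

Definition noise_model (d : measure_display) (T : measurableType d)
    (R : realType) (P : probability T R) (sigma : R) (n : nat)
    (Z : nat -> {RV P >-> R}) : Prop :=
  mutually_independent P n (fun t => Z t) /\
  forall t, (t < n)%N ->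
    'E_P[Z t] = 0%E /\ 'V_P[Z t] = (sigma ^+ 2)%:E /\ subgaussian P sigma (Z t).

Definition ogd_cum_err (d : measure_display) (T : measurableType d)
    (R : realType) (P : probability T R) (restart : nat -> bool)
    (r : nat -> nat -> R) (eta : nat -> R) (n : nat) (theta : nat -> R)
    (Z : nat -> {RV P >-> R}) : T -> R :=
  fun w => \sum_(t < n)
    (ogd restart r eta (fun s => theta s + Z s w) t - theta t) ^+ 2.

Arguments noise_model {d T R} P sigma n Z.
Arguments ogd_cum_err {d T R} P restart r eta n theta Z _.

(* Main.v *)
Require Import Defs.
From mathcomp Require Import all_boot all_order all_algebra.
From mathcomp Require Import all_classical all_reals all_analysis.
From mathcomp Require Import ring lra zify.
From mathcomp Require Import measurable_realfun.
Import Order.TTheory GRing.Theory Num.Theory.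
Local Open Scope classical_set_scope.
Local Open Scope ereal_scope.
Local Open Scope ring_scope.
Local Open Scope ring_scope.
Section Indep.
Context d (T : measurableType d) (R : realType) (P : probability T R).
Local Open Scope ereal_scope.

Lemma indep_mul0 (X Y : {RV P >-> R}) :
  (forall A B, measurable A -> measurable B ->
     P (X @^-1` A `&` Y @^-1` B) = P (X @^-1` A) * P (Y @^-1` B)) ->
  (X : T -> R) \in Lfun P 1 -> (Y : T -> R) \in Lfun P 1 ->
  (X \* Y)%R \in Lfun P 1 -> 'E_P[Y] = 0 -> 'E_P[X \* Y]%R = 0.
Proof.
move=> ind X1 Y1 XY1 EY0.
have mW : measurable_fun setT (fun w => (X w, Y w)) by exact: measurable_fun_pair.
pose Wm := isMeasurableFun.Build _ _ _ _ _ mW.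
pose W : {mfun T >-> (R * R)%type} := MeasurableFun.Pack (MeasurableFun.Class Wm).
pose mu := distribution P X.
pose nu := distribution P Y.
pose m' := distribution P W.
have prodE : forall S, measurable S -> (mu \x nu) S = m' S.
  apply: product_measure_unique => A B mA mB.
  by rewrite /m' /mu /nu /distribution /pushforward /= -ind.
pose f := fun p : R * R => (p.1 * p.2)%:E.
have mf : measurable_fun [set: (R * R)%type] f.
  apply/measurable_EFinP; apply: measurable_funM.
  exact: measurable_fst. exact: measurable_snd.
have iX : P.-integrable setT (EFin \o X) by exact/Lfun1_integrable.
have iY : P.-integrable setT (EFin \o Y) by exact/Lfun1_integrable.
have iXY : P.-integrable setT (EFin \o (X \* Y)%R) by exact/Lfun1_integrable.
have E1 : 'E_P[X \* Y]%R = \int[m']_z f z.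
  rewrite expectation_def integral_distribution //.
have inu : nu.-integrable setT EFin.
  apply/integrableP; split; first exact/measurable_EFinP.
  rewrite ge0_integral_distribution //.
  - by move/integrableP : iY => [].
  - by apply: measurableT_comp => //; exact/measurable_EFinP.
have Enu : \int[nu]_y (y%:E) = 0.
  rewrite integral_distribution //.
  all: try (by rewrite -EY0 expectation_def).
have imu : \int[mu]_x `|x%:E| < +oo.
  rewrite ge0_integral_distribution //.
  - by move/integrableP : iX => [].
  - by apply: measurableT_comp => //; exact/measurable_EFinP.
have inunorm : \int[nu]_y `|y%:E| < +oo by move/integrableP : inu => [].
have iprod : (mu \x nu).-integrable setT f.
  apply/(@integrable12ltyP _ _ _ _ _ mu nu f mf).
  rewrite /f /=.
  have mabs : measurable_fun setT (fun x : R => `|x|%:E).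
    change (measurable_fun setT (EFin \o (@Num.norm R R))).
    by apply/measurable_EFinP; exact: normr_measurable.
  under eq_integral => x _.
    under eq_integral => y _ do rewrite normrM EFinM.
    rewrite ge0_integralZl//.
    over.
  rewrite /= [X in (X < _)%E](_ : _ = (\int[nu]_y `|y|%:E) * \int[mu]_x `|x|%:E)%E.
    by rewrite lte_mul_pinfty // ?ge0_fin_numE// integral_ge0.
  rewrite -ge0_integralZl//.
  - by apply: eq_integral => x _; rewrite muleC.
  - by rewrite integral_ge0.
rewrite E1 -(eq_measure_integral _ (fun A mA _ => prodE A mA)).
rewrite -integral12_prod_meas1 //.
rewrite /fubini_F.
under eq_integral => x _.
  under eq_integral => y _ do rewrite /f /= EFinM.
  rewrite integralZl // Enu mule0.
  over.
by rewrite integral0.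
Qed.

Lemma L2_of_var (X : {RV P >-> R}) (s2 : R) : 'E_P[X] = 0 -> 'V_P[X] = s2%:E ->
  (X : T -> R) \in Lfun P 2%:E /\ 'E_P[X \* X]%R = s2%:E.
Proof.
move=> EX VX.
have EV : 'E_P[X \* X]%R = s2%:E.
  rewrite -VX /variance covariance.unlock EX /=.
  congr expectation; apply/funext => w /=.
  by rewrite -[RHS]/((X w - 0) * (X w - 0))%R subr0.
split => //.
rewrite inE; apply/andP; split; first by rewrite inE; exact: measurable_funP.
rewrite inE /= /finite_norm.
apply: (@lty_poweRy _ _ 2%R) => //.
rewrite powR_Lnorm //.
rewrite [X in (X < _)%E](_ : _ = 'E_P[X \* X]%R); first by rewrite EV ltry.
rewrite expectation_def; apply: eq_integral => w _ /=.
by rewrite powR_mulrn ?normr_ge0 // real_normK ?num_real.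
Qed.

Lemma indep_pair n (Z : nat -> {RV P >-> R}) s u :
  mutually_independent P n (fun t => Z t) -> (s < n)%N -> (u < n)%N -> s != u ->
  forall A B, measurable A -> measurable B ->
  P (Z s @^-1` A `&` Z u @^-1` B) = P (Z s @^-1` A) * P (Z u @^-1` B).
Proof.
move=> ind sn un su A B mA mB.
pose Bf t := if t == s then A else if t == u then B else setT.
have mBf : forall t, measurable (Bf t).
  by move=> t; rewrite /Bf; case: ifP => _ //; case: ifP.
have := ind Bf mBf.
have -> : \bigcap_(t in [set t | (t < n)%N]) (Z t @^-1` Bf t) =
    Z s @^-1` A `&` Z u @^-1` B.
  apply/seteqP; split => w /=.
  - move=> h; split.
      by have := h s sn; rewrite /Bf eqxx.
    by have := h u un; rewrite /Bf eqxx eq_sym (negbTE su).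
  - move=> [hA hB] t tn; rewrite /Bf.
    by case: eqP => [->//|_]; case: eqP => [->//|_].
move=> ->.
rewrite (bigD1 (Ordinal sn)) //= (bigD1 (Ordinal un)) /=; last first.
  by rewrite -val_eqE /= eq_sym.
rewrite big1 ?mule1.
  by rewrite /Bf eqxx eq_sym (negbTE su) eqxx.
move=> t /andP[ts tu]; rewrite /Bf.
rewrite -val_eqE /= in ts; rewrite -val_eqE /= in tu.
by rewrite (negbTE ts) (negbTE tu) preimage_setT probability_setT.
Qed.

Section Noise.
Variables (n : nat) (Z : nat -> {RV P >-> R}) (sig : R).
Hypothesis Z2 : forall s, (s < n)%N -> (Z s : T -> R) \in Lfun P 2%:E.
Hypothesis EZ : forall s, (s < n)%N -> 'E_P[Z s] = 0.
Hypothesis EZZ : forall s u, (s < n)%N -> (u < n)%N ->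
  'E_P[Z s \* Z u]%R = (if s == u then sig ^+ 2 else 0)%:E.

Definition Gf (c : R) (a : nat -> R) k : T -> R :=
  (fun w => c + \sum_(s < k) a s * Z s w)%R.

Let Pfin : P setT \is a fin_num := fin_num_measure P _ measurableT.

Let L1of (f : T -> R) : f \in Lfun P 2%:E -> f \in Lfun P 1.
Proof. exact: Lfun_subset12. Qed.

Lemma Gprop (c : R) (a : nat -> R) k : (k <= n)%N ->
  [/\ Gf c a k \in Lfun P 2%:E,
      (forall u, (k <= u < n)%N -> 'E_P[Gf c a k \* Z u]%R = 0) &
      'E_P[Gf c a k \* Gf c a k]%R =
        (c ^+ 2 + sig ^+ 2 * \sum_(s < k) a s ^+ 2)%:E].
Proof.
elim: k => [_|k IH kn].
  have G0 : Gf c a 0 = cst c by apply/funext => w; rewrite /Gf big_ord0 addr0.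
  rewrite G0 big_ord0 mulr0 addr0; split.
  - exact: Lfun_cst.
  - move=> u /andP[_ un].
    have -> : (cst c \* Z u)%R = (c \o* Z u)%R.
      by apply/funext => w /=; rewrite mulrC.
    by rewrite expectationZl ?EZ ?mule0 // L1of // Z2.
  - have -> : (cst c \* cst c)%R = (cst (c ^+ 2) : T -> R)%R.
      by apply/funeqP => w /=; rewrite expr2.
    by rewrite expectation_cst.
have kn' : (k < n)%N by [].
have [G2 GZ GG] := IH (ltnW kn).
have GS : Gf c a k.+1 = (Gf c a k \+ (a k \o* Z k))%R.
  by apply/funeqP => w; rewrite /Gf big_ord_recr /= addrA (mulrC (Z k w)).
have Zk2 := Z2 _ kn'.
have aZ2 : (a k \o* Z k)%R \in Lfun P 2%:E by rewrite Lfun_scale ?lee1n ?ler1n.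
rewrite GS; split.
- by rewrite rpredD // ?lee1n ?ler1n.
- move=> u /andP[ku un].
  have -> : ((Gf c a k \+ a k \o* Z k) \* Z u)%R =
      ((Gf c a k \* Z u) \+ (a k \o* (Z k \* Z u)))%R.
    by apply/funext => w /=; ring.
  rewrite expectationD; last 2 first.
  - exact: Lfun2_mul_Lfun1 G2 (Z2 _ un).
  - by rewrite Lfun_scale // Lfun2_mul_Lfun1 // Z2.
  rewrite expectationZl; last by rewrite Lfun2_mul_Lfun1 // Z2.
  rewrite GZ; last by rewrite un andbT ltnW.
  rewrite EZZ // ifN ?mule0 ?adde0 //.
  by rewrite neq_ltn ku.
- have -> : ((Gf c a k \+ a k \o* Z k) \* (Gf c a k \+ a k \o* Z k))%R =
      ((Gf c a k \* Gf c a k) \+ ((2 * a k) \o* (Gf c a k \* Z k))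
        \+ ((a k ^+ 2) \o* (Z k \* Z k)))%R.
    by apply/funext => w /=; ring.
  rewrite expectationD; last 2 first.
  - by rewrite rpredD // ?Lfun_scale // Lfun2_mul_Lfun1 // Z2.
  - by rewrite Lfun_scale // Lfun2_mul_Lfun1 // Z2.
  rewrite expectationD; last 2 first.
  - exact: Lfun2_mul_Lfun1.
  - by rewrite Lfun_scale // Lfun2_mul_Lfun1 // Z2.
  rewrite !expectationZl; last 2 first.
  - by rewrite Lfun2_mul_Lfun1 // Z2.
  - by rewrite Lfun2_mul_Lfun1 // Z2.
  rewrite GG GZ ?leqnn // EZZ // eqxx mule0 adde0 -EFinM -EFinD.
  by congr EFin; rewrite big_ord_recr /=; ring.
Qed.

Definition errf (a : nat -> nat -> R) (theta : nat -> R) (t : nat) : T -> R :=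
  (fun w => (\sum_(s < t) a t s * (theta s + Z s w) - theta t) ^+ 2)%R.

Lemma errf_prop a theta t : (t < n)%N ->
  errf a theta t \in Lfun P 1 /\
  'E_P[errf a theta t] = ((\sum_(s < t) a t s * theta s - theta t) ^+ 2 +
      sig ^+ 2 * \sum_(s < t) a t s ^+ 2)%:E.
Proof.
move=> tn.
have [G2 _ GG] := Gprop (\sum_(s < t) a t s * theta s - theta t)%R (a t) t (ltnW tn).
have -> : errf a theta t = (Gf (\sum_(s < t) a t s * theta s - theta t)%R (a t) t \*
    Gf (\sum_(s < t) a t s * theta s - theta t)%R (a t) t)%R.
  apply/funeqP => w; rewrite /errf /Gf /=.
  under eq_bigr => s _ do rewrite mulrDr.
  by rewrite big_split /= expr2; ring.
by split; [exact: Lfun2_mul_Lfun1|].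
Qed.

Lemma risk_eq (a : nat -> nat -> R) (theta : nat -> R) :
  'E_P[(fun w => \sum_(t < n) errf a theta t w)%R] =
  (\sum_(t < n) ((\sum_(s < t) a t s * theta s - theta t) ^+ 2 +
      sig ^+ 2 * \sum_(s < t) a t s ^+ 2))%:E.
Proof.
suff : forall m, (m <= n)%N ->
  (fun w => \sum_(t < m) errf a theta t w)%R \in Lfun P 1 /\
  'E_P[(fun w => \sum_(t < m) errf a theta t w)%R] =
  (\sum_(t < m) ((\sum_(s < t) a t s * theta s - theta t) ^+ 2 +
      sig ^+ 2 * \sum_(s < t) a t s ^+ 2))%:E.
  by move=> /(_ n (leqnn n)) [].
elim => [_|m IH mn].
  have -> : (fun w => \sum_(t < 0) errf a theta t w)%R = (cst 0%R : T -> R).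
    by apply/funeqP => w; rewrite big_ord0.
  by rewrite big_ord0 expectation_cst; split => //; exact: Lfun_cst.
have [F1 FE] := IH (ltnW mn).
have [g1 gE] := errf_prop a theta m mn.
have -> : (fun w => \sum_(t < m.+1) errf a theta t w)%R =
    ((fun w => \sum_(t < m) errf a theta t w) \+ errf a theta m)%R.
  by apply/funeqP => w; rewrite big_ord_recr.
split; first by rewrite rpredD.
by rewrite expectationD // FE gE big_ord_recr /= EFinD.
Qed.

End Noise.
End Indep.
Local Open Scope ring_scope.
Fixpoint acoef (R : realType) (restart : nat -> bool) (r : nat -> nat -> R)
    (eta : nat -> R) (t : nat) : nat -> R :=
  match t with
  | 0 => fun _ => 0
  | t'.+1 => fun s => if restart t'.+1 then r t'.+1 s
      else if s == t' then 2 * eta t'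
      else (1 - 2 * eta t') * acoef R restart r eta t' s
  end.

Arguments acoef {R}.

Lemma ogd_linear (R : realType) restart r (eta : nat -> R) y t :
  ogd restart r eta y t = \sum_(s < t) acoef restart r eta t s * y s.
Proof.
elim: t => [|t IH]; first by rewrite big_ord0.
rewrite /=; case: (restart t.+1) => //.
rewrite big_ord_recr /= eqxx IH.
have -> : \sum_(i < t) (if (i : nat) == t then 2 * eta t
     else (1 - 2 * eta t) * acoef restart r eta t i) * y i =
  \sum_(i < t) (1 - 2 * eta t) * (acoef restart r eta t i * y i).
  apply: eq_bigr => i _; rewrite (ltn_eqF (ltn_ord i)); ring.
rewrite -mulr_sumr; ring.
Qed.
Local Open Scope ring_scope.
Section Det.
Context (R : realType).

Lemma cs_nat (b : nat -> R) m t : (m <= t)%N ->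
  (\sum_(m <= s < t) b s) ^+ 2 <= (t - m)%:R * \sum_(m <= s < t) b s ^+ 2.
Proof.
elim: t => [|t IH].
  by rewrite leqn0 => /eqP ->; rewrite big_geq // expr0n /= mul0r.
rewrite leq_eqVlt => /orP[/eqP ->|mt]; first by rewrite big_geq // expr0n /= subnn mul0r.
have mt' : (m <= t)%N by [].
rewrite !big_nat_recr //= subSn // mulrSr.
have := IH mt'.
set S := \sum_(m <= s < t) b s.
set Q := \sum_(m <= s < t) b s ^+ 2.
set k := (t - m)%:R.
have k0 : 0 <= k by rewrite /k ler0n.
have Q0 : 0 <= Q by rewrite /Q sumr_ge0 // => i _; rewrite sqr_ge0.
move=> h.
have h2 : k * (S ^+ 2 + 2 * S * b t) <= k * (k * Q + Q + k * b t ^+ 2).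
  have : 0 <= (S - k * b t) ^+ 2 by rewrite sqr_ge0.
  nra.
rewrite sqrrD -mulr_natr.
have [k0'|kpos] := eqVneq k 0.
  move: h; rewrite k0' mul0r => h.
  have S0 : S = 0.
    by apply/eqP; rewrite -sqrf_eq0 eq_le h sqr_ge0.
  rewrite S0; nra.
have kp : 0 < k by rewrite lt0r kpos k0.
have h3 : S ^+ 2 + 2 * S * b t <= k * Q + Q + k * b t ^+ 2.
  by rewrite -(ler_pM2l kp).
nra.
Qed.

Definition stepf (C : R) (m : nat) : nat -> R := fun s => if (m <= s)%N then C else 0.

Lemma bias_bound (a : nat -> R) (C : R) m t (K : nat) :
  (m <= t)%N -> (t - m <= K)%N ->
  C ^+ 2 / 4 - C ^+ 2 * K%:R * \sum_(s < t) a s ^+ 2 <=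
  (\sum_(s < t) a s * stepf C m s - stepf C m t) ^+ 2.
Proof.
move=> mt tK.
have E1 : \sum_(s < t) a s * stepf C m s = C * \sum_(m <= s < t) a s.
  rewrite -(big_mkord xpredT (fun s => a s * stepf C m s)).
  rewrite (@big_cat_nat _ _ _ m 0 t _ _ (leq0n m) mt) /=.
  rewrite big_nat_cond big1 ?add0r; last first.
    by move=> i /andP[/andP[_ im] _]; rewrite /stepf leqNgt im mulr0.
  rewrite mulr_sumr; apply: eq_big_nat => i /andP[mi _].
  by rewrite /stepf mi mulrC.
have E2 : \sum_(m <= s < t) a s ^+ 2 <= \sum_(s < t) a s ^+ 2.
  rewrite -(big_mkord xpredT (fun s => a s ^+ 2)).
  rewrite [leRHS](@big_cat_nat _ _ _ m 0 t _ _ (leq0n m) mt) /= lerDr.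
  by rewrite sumr_ge0 // => i _; rewrite sqr_ge0.
have CS := @cs_nat a m t mt.
set S := \sum_(m <= s < t) a s in E1 CS.
set Q := \sum_(m <= s < t) a s ^+ 2 in E2 CS.
set V := \sum_(s < t) a s ^+ 2 in E2 *.
rewrite E1 /stepf mt.
have Q0 : 0 <= Q by rewrite /Q sumr_ge0 // => i _; rewrite sqr_ge0.
have hK : ((t - m)%:R : R) <= K%:R by rewrite ler_nat.
have h1 : S ^+ 2 <= K%:R * V.
  apply: (le_trans CS); apply: (le_trans (ler_wpM2r Q0 hK)).
  by apply: ler_wpM2l; rewrite ?ler0n.
have h2 : 1 / 4 - S ^+ 2 <= (S - 1) ^+ 2.
  have : 0 <= (2 * S - 1) ^+ 2 by rewrite sqr_ge0.
  nra.
have C2 : 0 <= C ^+ 2 by rewrite sqr_ge0.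
have -> : (C * S - C) ^+ 2 = C ^+ 2 * (S - 1) ^+ 2 by ring.
have : C ^+ 2 * (1 / 4 - S ^+ 2) <= C ^+ 2 * (S - 1) ^+ 2 by apply: ler_wpM2l.
have : C ^+ 2 * S ^+ 2 <= C ^+ 2 * (K%:R * V) by apply: ler_wpM2l.
nra.
Qed.

Lemma window_sum (V : nat -> R) K k :
  \sum_(j < k) \sum_(1 + j * K <= t < 1 + j.+1 * K) V t =
  \sum_(1 <= t < 1 + k * K) V t.
Proof.
elim: k => [|k IH]; first by rewrite big_ord0 mul0n big_geq.
rewrite big_ord_recr /= IH -big_cat_nat //.
by rewrite leq_add2l leq_mul2r leqnSn orbT.
Qed.

Lemma pigeon (V : nat -> R) K n : (0 < K)%N -> (1 + K * K <= n)%N ->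
  (forall t, 0 <= V t) ->
  exists2 j, (j < K)%N &
    \sum_(1 + j * K <= t < 1 + j.+1 * K) V t <= (\sum_(t < n) V t) / K%:R.
Proof.
move=> K0 Kn V0.
case: K K0 Kn => [//|K] _ Kn.
have Kp : (0 : R) < K.+1%:R by rewrite ltr0n.
apply: contrapT => H.
have H' : forall j : 'I_K.+1, (\sum_(t < n) V t) / K.+1%:R <
    \sum_(1 + j * K.+1 <= t < 1 + j.+1 * K.+1) V t.
  move=> j; rewrite ltNge; apply/negP => hle; apply: H; by exists j.
have : \sum_(j < K.+1) (\sum_(t < n) V t) / K.+1%:R <
    \sum_(j < K.+1) \sum_(1 + j * K.+1 <= t < 1 + j.+1 * K.+1) V t.
  rewrite big_ord_recl [X in _ < X]big_ord_recl.
  rewrite ltr_leD //.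
  apply: ler_sum => j _; apply: ltW.
  exact: (H' (lift ord0 j)).
rewrite window_sum sumr_const card_ord -[_ *+ K.+1]mulr_natr -mulrA mulVf ?mulr1; last by rewrite gt_eqF.
apply/negP; rewrite -leNgt.
rewrite -(big_mkord xpredT V) (@big_cat_nat _ _ _ 1 0 n) //; last by rewrite (leq_trans _ Kn) // leq_addr.
rewrite (@big_cat_nat _ _ _ (1 + K.+1 * K.+1) 1 n) //= ?leq_addr //.
rewrite addrC -addrA lerDl addr_ge0 // sumr_ge0 //.
Qed.

Lemma step_TV (C U : R) m n : 0 <= C -> 0 <= U -> (1 <= m)%N -> (m < n)%N ->
  TVball n C U (stepf C m).
Proof.
move=> C0 U0 m1 mn; split; last first.
  by rewrite /stepf leqNgt m1 normr0.
rewrite (@big_cat_nat _ _ _ m 1 n) //=; last exact: ltnW.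
rewrite (@big_cat_nat _ _ _ m.+1 m n) //=.
rewrite big_nat_cond big1 ?add0r; last first.
  move=> i /andP[/andP[_ im] _]; rewrite /stepf leqNgt im.
  by rewrite leqNgt (leq_ltn_trans (leq_pred i) im) subrr normr0.
rewrite [X in X + _]big_nat1 /stepf leqnn.
have -> : (m <= m.-1)%N = false by rewrite leqNgt prednK // leqnn.
rewrite subr0 ger0_norm //.
rewrite big_nat_cond big1 ?addr0 //.
move=> i /andP[/andP[mi _] _].
by rewrite (ltnW mi) -ltnS prednK ?mi ?subrr ?normr0 // (leq_trans _ mi).
Qed.

Definition riskf (sig : R) (a : nat -> nat -> R) n (theta : nat -> R) :=
  \sum_(t < n) ((\sum_(s < t) a t s * theta s - theta t) ^+ 2 +
      sig ^+ 2 * \sum_(s < t) a t s ^+ 2).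

Lemma det_lbK (C U sig : R) (a : nat -> nat -> R) n K :
  0 < C -> 0 < U -> (0 < K)%N -> (1 + K * K <= n)%N ->
  exists theta, TVball n C U theta /\
    Num.min (sig ^+ 2) (C ^+ 2) * K%:R / 8 <= riskf sig a n theta.
Proof.
move=> C0 U0 K0 Kn.
pose V t := \sum_(s < t) a t s ^+ 2.
have V0 : forall t, 0 <= V t by move=> t; rewrite sumr_ge0 // => i _; rewrite sqr_ge0.
have [j jK hj] := @pigeon V K n K0 Kn V0.
set X := \sum_(t < n) V t in hj.
have X0 : 0 <= X by rewrite sumr_ge0.
pose m := (1 + j * K)%N.
have mK : (1 + j.+1 * K <= n)%N.
  apply: leq_trans Kn; rewrite leq_add2l leq_mul2r jK orbT //.
have m1 : (1 <= m)%N by rewrite leq_addr.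
have mn : (m < n)%N.
  apply: leq_trans mK; rewrite /m ltn_add2l mulSn -[X in (X < _)%N]add0n ltn_add2r //.
exists (stepf C m); split; first by apply: step_TV; rewrite ?ltW.
pose b t := (\sum_(s < t) a t s * stepf C m s - stepf C m t) ^+ 2.
have b0 : forall t, 0 <= b t by move=> t; rewrite sqr_ge0.
have RE : riskf sig a n (stepf C m) = \sum_(t < n) b t + sig ^+ 2 * X.
  by rewrite /riskf big_split /= mulr_sumr.
have Bge : \sum_(m <= t < 1 + j.+1 * K) b t <= \sum_(t < n) b t.
  rewrite -(big_mkord xpredT b) (@big_cat_nat _ _ _ m 0 n) //=; last exact: ltnW.
  rewrite (@big_cat_nat _ _ _ (1 + j.+1 * K) m n) //=; last first.
    by rewrite /m leq_add2l leq_mul2r leqnSn orbT.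
  rewrite addrC -addrA lerDl addr_ge0 // sumr_ge0 //.
have Wb : \sum_(m <= t < 1 + j.+1 * K) (C ^+ 2 / 4 - C ^+ 2 * K%:R * V t) <=
    \sum_(m <= t < 1 + j.+1 * K) b t.
  apply: ler_sum_nat => t /andP[mt tK].
  apply: bias_bound => //.
  rewrite leq_subLR -ltnS; apply: (leq_trans tK).
  by rewrite /m mulSn; lia.
rewrite sumrB sumr_const_nat -mulr_sumr in Wb.
have cnt : ((1 + j.+1 * K - m)%N : nat) = K.
  by rewrite /m mulSn addnCA addnK.
rewrite cnt -mulr_natr in Wb.
have WV : C ^+ 2 * K%:R * \sum_(m <= t < 1 + j.+1 * K) V t <= C ^+ 2 * X.
  have Kp : (0 : R) < K%:R by rewrite ltr0n.
  have := hj; rewrite -/m => hj'.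
  rewrite -mulrA; apply: ler_wpM2l; first by rewrite sqr_ge0.
  by rewrite mulrC -ler_pdivlMr.
rewrite RE.
have sg0 : 0 <= sig ^+ 2 by rewrite sqr_ge0.
have Cg0 : 0 <= C ^+ 2 by rewrite sqr_ge0.
have Bsum0 : 0 <= \sum_(t < n) b t by rewrite sumr_ge0.
set B := \sum_(t < n) b t in Bge Bsum0 *.
set W := \sum_(m <= t < 1 + j.+1 * K) b t in Bge Wb.
set SV := \sum_(m <= t < 1 + j.+1 * K) V t in Wb WV.
have mins : Num.min (sig ^+ 2) (C ^+ 2) <= sig ^+ 2 by rewrite ge_min lexx.
have minc : Num.min (sig ^+ 2) (C ^+ 2) <= C ^+ 2 by rewrite ge_min lexx orbT.
have min0 : 0 <= Num.min (sig ^+ 2) (C ^+ 2) by rewrite le_min sg0 Cg0.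
have Kr0 : (0 : R) <= K%:R by rewrite ler0n.
have [XK|XK] := leP (K%:R / 8) X.
  have : Num.min (sig ^+ 2) (C ^+ 2) * (K%:R / 8) <= sig ^+ 2 * X.
    by apply: ler_pM.
  nra.
have : Num.min (sig ^+ 2) (C ^+ 2) * K%:R <= C ^+ 2 * K%:R by apply: ler_wpM2r.
nra.
Qed.

Lemma det_lb (C U sig : R) (a : nat -> nat -> R) n :
  0 < C -> 0 < U -> (16 <= n)%N ->
  exists theta, TVball n C U theta /\
    Num.min (sig ^+ 2) (C ^+ 2) * Num.sqrt n%:R / 32 <= riskf sig a n theta.
Proof.
move=> C0 U0 n16.
set s := Num.sqrt n%:R.
have s0 : 0 <= s by rewrite sqrtr_ge0.
have ss : s ^+ 2 = n%:R by rewrite sqr_sqrtr // ler0n.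
have n16' : (16 : R) <= n%:R by rewrite (ler_nat R 16 n).
have s4 : 4 <= s.
  have : (4 : R) ^+ 2 <= s ^+ 2 by rewrite ss; apply: le_trans n16'; lra.
  by rewrite ler_sqr // ?nnegrE // ler0n.
set K := Num.truncn (s / 2).
have /andP[hK1 hK2] := truncn_itv (divr_ge0 s0 (ler0n R 2)).
rewrite -/K in hK1 hK2.
have Ks : s / 4 <= K%:R by move: hK2; rewrite -[K.+1]addn1 natrD; lra.
have K0 : (0 < K)%N by rewrite -(ltr0n R); lra.
have Kn : (1 + K * K <= n)%N.
  rewrite -(ler_nat R) natrD natrM.
  have K0' : (0 : R) <= K%:R by rewrite ler0n.
  have : K%:R * K%:R <= (s / 2) * (s / 2) by apply: ler_pM.
  move: ss; rewrite expr2 => ss.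
  nra.
have [theta [TVt Rt]] := @det_lbK C U sig a n K C0 U0 K0 Kn.
exists theta; split => //.
apply: le_trans Rt.
have min0 : 0 <= Num.min (sig ^+ 2) (C ^+ 2) by rewrite le_min !sqr_ge0.
have : Num.min (sig ^+ 2) (C ^+ 2) * (s / 4) <= Num.min (sig ^+ 2) (C ^+ 2) * K%:R.
  by apply: ler_wpM2l.
lra.
Qed.
End Det.

Theorem proposition1 (R : realType) (C U sigma : R) :
  0 < C -> 0 < U -> 0 < sigma ->
  (forall (restart : nat -> bool) (r : nat -> nat -> R) (eta : nat -> R),
      is_linear_forecaster (ogd restart r eta)) /\
  exists (c : R) (k N : nat), 0 < c /\
    forall n : nat, (N <= n)%N ->
    forall (restart : nat -> bool) (r : nat -> nat -> R) (eta : nat -> R)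
           (d : measure_display) (T : measurableType d) (P : probability T R)
           (Z : nat -> {RV P >-> R}),
      noise_model P sigma n Z ->
      ((c * Num.sqrt n%:R / (ln n%:R) ^+ k)%:E <=
        ereal_sup [set 'E_P[ogd_cum_err P restart r eta n theta Z]
                  | theta in TVball n C U])%E.
Proof.
move=> C0 U0 s0; split.
  move=> restart r eta; exists (acoef restart r eta) => y t; exact: ogd_linear.
exists (Num.min (sigma ^+ 2) (C ^+ 2) / 32), 0%N, 16%N; split.
  by rewrite divr_gt0 // lt_min !exprn_gt0.
move=> n n16 restart r eta d T P Z [ind hz].
set a := acoef restart r eta.
have [theta [TVt Rt]] := @det_lb R C U sigma a n C0 U0 n16.
have Z2 : forall s, (s < n)%N -> (Z s : T -> R) \in Lfun P 2%:E.
  by move=> s sn; have [EZ [VZ _]] := hz s sn; case: (@L2_of_var _ _ _ P (Z s) _ EZ VZ).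
have EZ : forall s, (s < n)%N -> 'E_P[Z s] = 0 by move=> s sn; case: (hz s sn).
have EZZ : forall s u, (s < n)%N -> (u < n)%N ->
    'E_P[Z s \* Z u]%R = (if s == u then sigma ^+ 2 else 0)%:E.
  move=> s u sn un; case: eqP => [<-|/eqP su].
    by have [EZs [VZ _]] := hz s sn; case: (@L2_of_var _ _ _ P (Z s) _ EZs VZ).
  have Pfin : P setT \is a fin_num := fin_num_measure P _ measurableT.
  apply: indep_mul0.
  - exact: (@indep_pair _ _ _ P n Z s u ind sn un su).
  - exact: Lfun_subset12 (Z2 s sn).
  - exact: Lfun_subset12 (Z2 u un).
  - exact: Lfun2_mul_Lfun1 (Z2 s sn) (Z2 u un).
  - exact: EZ.
apply: le_trans (ereal_sup_ubound _); last by exists theta.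
have -> : ogd_cum_err P restart r eta n theta Z =
    (fun w => \sum_(t < n) @errf _ _ _ P Z a theta t w)%R.
  apply/funext => w; rewrite /ogd_cum_err /errf.
  by apply: eq_bigr => t _; rewrite ogd_linear.
rewrite (@risk_eq _ _ _ P n Z sigma Z2 EZ EZZ) lee_fin expr0 divr1.
apply: le_trans Rt; rewrite /riskf le_eqVlt; apply/orP; left; apply/eqP.
by rewrite mulrAC.
Qed.
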